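(* Let $G_1$ and $G_2$ be torsion-free groups such that: (i) in both $G_1$ and $G_2$, every subgroup commensurable to a product of two infinite groups is contained in a maximal product subgroup; (ii) in $G_1$, every maximal product subgroup $Q$ decomposes as $Q_1\times\cdots\times Q_s$ where each $Q_i$ either is infinite cyclic or admits an IMC generating set; (iii) in $G_2$, if two maximal product subgroups $P_1,P_2$ are such that $P_1\cap P_2$ has finite index in $P_1$, then $P_1=P_2$; (iv) $G_2$ has almost stable centralisers. If $G_1$ is a finite-index subgroup of $G_2$ and $P:=P_1\times\cdots\times P_s$ is a maximal product subgroup of $G_2$ such that $\mathrm{VZ}(P)=\{1\}$ and no $P_i$ is virtually a product of two infinite groups, then there exists a maximal product subgroup $R:=R_1\times\cdots\times R_s$ of $G_1$ such that each $R_i$ is a finite-index subgroup of $P_i$.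
   Context: A maximal product subgroup of a group is a maximal element (for inclusion) among subgroups decomposing as a direct product of two non-trivial groups. A group $G$ has almost stable centralisers if for all $g\in G$, $k\ge1$, $C(g)$ has finite index in $C(g^k)$. A subset $S\subset G$ is an IMC generating set if it generates $G$ and satisfies: (Independence) for all distinct $s_1,s_2\in S$ and integers $p,q\ge1$, $[s_1^p,s_2^q]\ne1$; (Maximal Centralisers) for all $s\in S$, $g\in G$, if $C(s)\subsetneq C(g)$ then $g=1$. The virtual centre $\mathrm{VZ}(G)$ is the set of elements centralising some finite-index subgroup of $G$. Commensurable means having isomorphic finite-index subgroups. *)

(* Defs.v *)
From Stdlib Require Import List Arith.
Import ListNotations.
Set Implicit Arguments.

Record Grp := MkGrp {
  car :> Type;
  op : car -> car -> car;
  inv : car -> car;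
  one : car;
  op_assoc : forall x y z, op x (op y z) = op (op x y) z;
  op_1l : forall x, op one x = x;
  op_Vl : forall x, op (inv x) x = one
}.
Arguments op {g} _ _.
Arguments inv {g} _.
Arguments one {g}.

Section Defs.
Context {G : Grp}.

Definition fullset : G -> Prop := fun _ => True.
Definition sub (A B : G -> Prop) := forall x, A x -> B x.
Definition same_set (A B : G -> Prop) := forall x, A x <-> B x.

Fixpoint pw (g : G) (n : nat) : G :=
  match n with 0 => one | S m => op (pw g m) g end.

Definition is_subgroup (A : G -> Prop) :=
  A one /\ (forall x y, A x -> A y -> A (op x y)) /\ (forall x, A x -> A (inv x)).

Definition finite_index (H K : G -> Prop) :=
  is_subgroup H /\ sub H K /\
  exists l : list G, forall k, K k -> exists x, In x l /\ K x /\ H (op (inv x) k).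

Definition infinite (A : G -> Prop) := ~ exists l : list G, forall x, A x -> In x l.
Definition trivial (A : G -> Prop) := forall x, A x -> x = one.

Definition torsion_free (A : G -> Prop) :=
  forall g, A g -> forall n, pw g (S n) = one -> g = one.

Definition dprod2 (P A B : G -> Prop) :=
  is_subgroup P /\ is_subgroup A /\ is_subgroup B /\ sub A P /\ sub B P /\
  (forall a b, A a -> B b -> op a b = op b a) /\
  (forall x, A x -> B x -> x = one) /\
  (forall x, P x -> exists a b, A a /\ B b /\ x = op a b).

Definition product_subgroup (P : G -> Prop) :=
  exists A B, ~ trivial A /\ ~ trivial B /\ dprod2 P A B.

Definition maximal_product_sub (Amb P : G -> Prop) :=
  sub P Amb /\ product_subgroup P /\
  forall P', sub P' Amb -> product_subgroup P' -> sub P P' -> same_set P' P.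

Fixpoint prodl (f : nat -> G) (n : nat) : G :=
  match n with 0 => one | S m => op (prodl f m) (f m) end.

Definition dprod_fam (P : G -> Prop) (Ps : nat -> G -> Prop) (s : nat) :=
  is_subgroup P /\
  (forall i, i < s -> is_subgroup (Ps i)) /\
  (forall i j, i < s -> j < s -> i <> j ->
     forall x y, Ps i x -> Ps j y -> op x y = op y x) /\
  (forall x, P x <-> exists f : nat -> G, (forall i, i < s -> Ps i (f i)) /\ x = prodl f s) /\
  (forall f g : nat -> G, (forall i, i < s -> Ps i (f i) /\ Ps i (g i)) ->
     prodl f s = prodl g s -> forall i, i < s -> f i = g i).

Definition centraliser (A : G -> Prop) (g : G) : G -> Prop :=
  fun x => A x /\ op x g = op g x.

Definition generates (S Q : G -> Prop) :=
  is_subgroup Q /\ sub S Q /\ forall K, is_subgroup K -> sub S K -> sub Q K.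

Definition commutator (x y : G) : G := op (op (inv x) (inv y)) (op x y).

Definition IMC (Q S : G -> Prop) :=
  generates S Q /\
  (forall s1 s2, S s1 -> S s2 -> s1 <> s2 -> forall p q, 1 <= p -> 1 <= q ->
     commutator (pw s1 p) (pw s2 q) <> one) /\
  (forall s g, S s -> Q g ->
     (sub (centraliser Q s) (centraliser Q g) /\ ~ sub (centraliser Q g) (centraliser Q s)) ->
     g = one).

Definition inf_cyclic (Q : G -> Prop) :=
  exists g, generates (fun x => x = g) Q /\ infinite Q.

Definition VZ (P : G -> Prop) (g : G) :=
  P g /\ exists K, finite_index K P /\ forall k, K k -> op g k = op k g.

Definition almost_stable_centralisers (Amb : G -> Prop) :=
  forall g, Amb g -> forall k, 1 <= k ->
    finite_index (centraliser Amb g) (centraliser Amb (pw g k)).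

Definition cond_iii (Amb : G -> Prop) :=
  forall P1 P2, maximal_product_sub Amb P1 -> maximal_product_sub Amb P2 ->
    finite_index (fun x => P1 x /\ P2 x) P1 -> same_set P1 P2.
End Defs.

Definition prodGrp (B C : Grp) : Grp.
Proof.
  refine (@MkGrp (B * C)%type
    (fun x y => (op (fst x) (fst y), op (snd x) (snd y)))
    (fun x => (inv (fst x), inv (snd x))) (one, one) _ _ _).
  - intros [a b] [c d] [e f]; simpl; now rewrite !op_assoc.
  - intros [a b]; simpl; now rewrite !op_1l.
  - intros [a b]; simpl; now rewrite !op_Vl.
Defined.

Definition iso_sub {G H : Grp} (A : G -> Prop) (D : H -> Prop) :=
  exists f : G -> H,
    (forall x y, A x -> A y -> f (op x y) = op (f x) (f y)) /\
    (forall x y, A x -> A y -> f x = f y -> x = y) /\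
    (forall y, D y <-> exists x, A x /\ f x = y).

Definition commens_prod_inf {G : Grp} (A : G -> Prop) :=
  exists B C : Grp, infinite (@fullset B) /\ infinite (@fullset C) /\
  exists (A' : G -> Prop) (D : prodGrp B C -> Prop),
    finite_index A' A /\ finite_index D (@fullset (prodGrp B C)) /\ iso_sub A' D.

Definition virt_prod_inf {G : Grp} (A : G -> Prop) :=
  exists B C : Grp, infinite (@fullset B) /\ infinite (@fullset C) /\
  exists A' : G -> Prop, finite_index A' A /\ iso_sub A' (@fullset (prodGrp B C)).

Definition cond_i {G : Grp} (Amb : G -> Prop) :=
  forall A, is_subgroup A -> sub A Amb -> commens_prod_inf A ->
    exists P, maximal_product_sub Amb P /\ sub A P.

Definition cond_ii {G : Grp} (Amb : G -> Prop) :=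
  forall Q, maximal_product_sub Amb Q ->
    exists (s : nat) (Qs : nat -> G -> Prop), dprod_fam Q Qs s /\
      forall i, i < s -> inf_cyclic (Qs i) \/ exists S, IMC (Qs i) S.

(* Main.v *)
Require Import Defs.
From Stdlib Require Import List Arith Lia Classical ClassicalEpsilon ProofIrrelevance.
Import ListNotations.
Arguments op_assoc {g} x y z.
Arguments op_1l {g} x.
Arguments op_Vl {g} x.

Lemma op_Vr {G : Grp} (x : G) : op x (inv x) = one.
Proof.
  rewrite <- (op_1l (op x (inv x))).
  rewrite <- (op_Vl (inv x)) at 1.
  rewrite <- op_assoc. rewrite (op_assoc (inv x) x (inv x)). rewrite op_Vl, op_1l.
  apply op_Vl.
Qed.

Lemma op_1r {G : Grp} (x : G) : op x one = x.
Proof. rewrite <- (op_Vl x), op_assoc, op_Vr, op_1l. reflexivity. Qed.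

Lemma cancel_l {G : Grp} (a x y : G) : op a x = op a y -> x = y.
Proof.
  intro H. rewrite <- (op_1l x), <- (op_1l y), <- (op_Vl a), <- !op_assoc, H. reflexivity.
Qed.

Lemma cancel_r {G : Grp} (a x y : G) : op x a = op y a -> x = y.
Proof.
  intro H. rewrite <- (op_1r x), <- (op_1r y), <- (op_Vr a), !op_assoc, H. reflexivity.
Qed.

Lemma inv_uniq {G : Grp} (x y : G) : op x y = one -> y = inv x.
Proof. intro H. apply (cancel_l x). rewrite H, op_Vr. reflexivity. Qed.

Lemma inv_uniq_l {G : Grp} (x y : G) : op y x = one -> y = inv x.
Proof. intro H. apply (cancel_r x). rewrite H, op_Vl. reflexivity. Qed.

Lemma inv_inv {G : Grp} (x : G) : inv (inv x) = x.
Proof. symmetry. apply inv_uniq. apply op_Vl. Qed.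

Lemma inv_one {G : Grp} : inv (@one G) = one.
Proof. symmetry. apply inv_uniq. apply op_1l. Qed.

Lemma inv_op {G : Grp} (x y : G) : inv (op x y) = op (inv y) (inv x).
Proof.
  symmetry. apply inv_uniq. rewrite op_assoc, <- (op_assoc x y), op_Vr, op_1r, op_Vr. reflexivity.
Qed.

Lemma pw_add {G : Grp} (g : G) a b : pw g (a + b) = op (pw g a) (pw g b).
Proof.
  induction b; simpl. rewrite Nat.add_0_r, op_1r; reflexivity.
  rewrite Nat.add_succ_r. simpl. rewrite IHb, op_assoc. reflexivity.
Qed.

Lemma pw_comm {G : Grp} (g x : G) n : op x g = op g x -> op x (pw g n) = op (pw g n) x.
Proof.
  intro H. induction n; simpl. rewrite op_1r, op_1l; reflexivity.
  rewrite op_assoc, IHn, <- op_assoc, H, op_assoc. reflexivity.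
Qed.

Lemma sg_one {G : Grp} (A : G -> Prop) : is_subgroup A -> A one.
Proof. intros [h _]; exact h. Qed.
Lemma sg_op {G : Grp} (A : G -> Prop) x y : is_subgroup A -> A x -> A y -> A (op x y).
Proof. intros [_ [h _]]; apply h. Qed.
Lemma sg_inv {G : Grp} (A : G -> Prop) x : is_subgroup A -> A x -> A (inv x).
Proof. intros [_ [_ h]]; apply h. Qed.

Lemma sg_pw {G : Grp} (A : G -> Prop) g n : is_subgroup A -> A g -> A (pw g n).
Proof. intros hA hg. induction n; simpl. apply sg_one; auto. apply sg_op; auto. Qed.

Lemma sg_inter {G : Grp} (A B : G -> Prop) : is_subgroup A -> is_subgroup B ->
  is_subgroup (fun x => A x /\ B x).
Proof.
  intros hA hB. split; [|split].
  - split; apply sg_one; auto.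
  - intros x y [] []; split; apply sg_op; auto.
  - intros x []; split; apply sg_inv; auto.
Qed.

Lemma sg_full {G : Grp} : is_subgroup (@fullset G).
Proof. split; [|split]; unfold fullset; auto. Qed.

Lemma pigeon {A : Type} (f : nat -> A) (l : list A) :
  (forall n, In (f n) l) -> exists a b, a < b /\ f a = f b.
Proof.
  intro H. apply NNPP. intro Hn.
  assert (ND : NoDup (map f (seq 0 (S (length l))))).
  { apply NoDup_map_NoDup_ForallPairs; [|apply seq_NoDup].
    intros a b _ _ E. destruct (lt_eq_lt_dec a b) as [[h|h]|h]; auto.
    - exfalso; apply Hn; eauto.
    - exfalso; apply Hn; eauto. }
  pose proof (@NoDup_incl_length _ _ l ND) as L.
  assert (incl (map f (seq 0 (S (length l)))) l).
  { intros y Hy. apply in_map_iff in Hy. destruct Hy as [n [<- _]]. apply H. }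
  specialize (L H0). rewrite length_map, length_seq in L. lia.
Qed.

Lemma pw_le_diff {G : Grp} (g : G) a b : a < b -> exists m, pw g b = op (pw g a) (pw g (S m)).
Proof. intro h. exists (b - a - 1). rewrite <- pw_add. f_equal. lia. Qed.

Lemma fi_power {G : Grp} (H K : G -> Prop) x :
  finite_index H K -> is_subgroup K -> K x -> exists n, H (pw x (S n)).
Proof.
  intros [hH [hsub [l hl]]] hK hx.
  set (rep := fun n => epsilon (inhabits one) (fun c => In c l /\ K c /\ H (op (inv c) (pw x n)))).
  assert (spec : forall n, In (rep n) l /\ K (rep n) /\ H (op (inv (rep n)) (pw x n))).
  { intro n. apply (epsilon_spec (inhabits one) (fun c => In c l /\ K c /\ H (op (inv c) (pw x n)))).
    apply hl. apply sg_pw; auto. }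
  destruct (pigeon rep l (fun n => proj1 (spec n))) as [a [b [hab E]]].
  destruct (pw_le_diff x a b hab) as [m Em]. exists m.
  destruct (spec a) as [_ [_ Ha]]. destruct (spec b) as [_ [_ Hb]].
  rewrite <- E in Hb. rewrite Em in Hb.
  pose proof (sg_op _ _ _ hH (sg_inv _ _ hH Ha) Hb) as Hc.
  rewrite inv_op, inv_inv in Hc.
  rewrite <- op_assoc, (op_assoc (rep a) (inv (rep a))), op_Vr, op_1l, op_assoc, op_Vl, op_1l in Hc.
  exact Hc.
Qed.

Lemma fi_mono {G : Grp} (H H' K : G -> Prop) :
  finite_index H K -> is_subgroup H' -> sub H H' -> sub H' K -> finite_index H' K.
Proof.
  intros [hH [hsub [l hl]]] hH' s1 s2. split; auto. split; auto. exists l.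
  intros k hk. destruct (hl k hk) as [c [? [? ?]]]. exists c; auto.
Qed.

Lemma fi_refl {G : Grp} (X : G -> Prop) : is_subgroup X -> finite_index X X.
Proof.
  intro hX. split; auto. split. intros x h; exact h. exists [one].
  intros k hk. exists one. split. left; auto. split. apply sg_one; auto.
  rewrite inv_one, op_1l; auto.
Qed.

Lemma fi_restrict {G : Grp} (H K K' : G -> Prop) :
  finite_index H K -> is_subgroup K -> is_subgroup K' -> sub K' K ->
  finite_index (fun x => K' x /\ H x) K'.
Proof.
  intros [hH [hsub [l hl]]] hK hK' s. split. apply sg_inter; auto. split.
  intros x []; auto.
  set (pick := fun c => epsilon (inhabits c) (fun c' => K' c' /\ H (op (inv c) c'))).
  exists (map pick l). intros k hk.
  destruct (hl k (s _ hk)) as [c [hc [_ hck]]].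
  assert (sp : K' (pick c) /\ H (op (inv c) (pick c))).
  { apply (epsilon_spec (inhabits c) (fun c' => K' c' /\ H (op (inv c) c'))). exists k; auto. }
  destruct sp as [sp1 sp2].
  exists (pick c). split. apply in_map; auto. split; auto. split.
  apply sg_op; auto. apply sg_inv; auto.
  pose proof (sg_op _ _ _ hH (sg_inv _ _ hH sp2) hck) as Hc.
  rewrite inv_op, inv_inv, <- op_assoc, (op_assoc c), op_Vr, op_1l in Hc. exact Hc.
Qed.

Lemma fi_inter {G : Grp} (H1 H2 K : G -> Prop) :
  finite_index H1 K -> finite_index H2 K -> is_subgroup K ->
  finite_index (fun x => H1 x /\ H2 x) K.
Proof.
  intros [hH1 [hs1 [l1 hl1]]] [hH2 [hs2 [l2 hl2]]] hK. split. apply sg_inter; auto. split.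
  intros x []; auto.
  set (pick := fun p : G * G => epsilon (inhabits (fst p))
     (fun c => K c /\ H1 (op (inv (fst p)) c) /\ H2 (op (inv (snd p)) c))).
  exists (map pick (list_prod l1 l2)). intros k hk.
  destruct (hl1 k hk) as [c1 [hc1 [_ hck1]]].
  destruct (hl2 k hk) as [c2 [hc2 [_ hck2]]].
  assert (sp : K (pick (c1,c2)) /\ H1 (op (inv c1) (pick (c1,c2))) /\ H2 (op (inv c2) (pick (c1,c2)))).
  { apply (epsilon_spec (inhabits c1) (fun c => K c /\ H1 (op (inv c1) c) /\ H2 (op (inv c2) c))).
    exists k; auto. }
  destruct sp as [sp0 [sp1 sp2]].
  exists (pick (c1,c2)). split. apply in_map, in_prod; auto. split; auto.
  split.
  - pose proof (sg_op _ _ _ hH1 (sg_inv _ _ hH1 sp1) hck1) as Hc.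
    rewrite inv_op, inv_inv, <- op_assoc, (op_assoc c1), op_Vr, op_1l in Hc. exact Hc.
  - pose proof (sg_op _ _ _ hH2 (sg_inv _ _ hH2 sp2) hck2) as Hc.
    rewrite inv_op, inv_inv, <- op_assoc, (op_assoc c2), op_Vr, op_1l in Hc. exact Hc.
Qed.

Lemma prodl_ext {G : Grp} (f g : nat -> G) n :
  (forall i, i < n -> f i = g i) -> prodl f n = prodl g n.
Proof. induction n; simpl; intros H; auto. rewrite IHn, H; auto. Qed.

Lemma prodl_one {G : Grp} (f : nat -> G) n :
  (forall i, i < n -> f i = one) -> prodl f n = one.
Proof. induction n; simpl; intros H; auto. rewrite IHn, H, op_1l; auto. Qed.

Lemma prodl_delta {G : Grp} (f : nat -> G) n a :
  a < n -> (forall i, i < n -> i <> a -> f i = one) -> prodl f n = f a.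
Proof.
  induction n; intros ha H; [lia|]. simpl.
  destruct (Nat.eq_dec a n) as [->|ne].
  - rewrite prodl_one, op_1l; auto. intros i hi; apply H; lia.
  - rewrite IHn, (H n), op_1r; auto; lia.
Qed.

Lemma prodl_in {G : Grp} (K : G -> Prop) (f : nat -> G) n :
  is_subgroup K -> (forall i, i < n -> K (f i)) -> K (prodl f n).
Proof.
  intros hK. induction n; simpl; intros H. apply sg_one; auto. apply sg_op; auto.
Qed.

Lemma prodl_comm {G : Grp} (y : G) (f : nat -> G) n :
  (forall i, i < n -> op y (f i) = op (f i) y) -> op y (prodl f n) = op (prodl f n) y.
Proof.
  induction n; simpl; intros H. rewrite op_1l, op_1r; auto.
  rewrite op_assoc, IHn, <- op_assoc, H, op_assoc; auto.
Qed.

Lemma prodl_mul {G : Grp} (f g : nat -> G) n :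
  (forall i k, i < n -> k < i -> op (f i) (g k) = op (g k) (f i)) ->
  op (prodl f n) (prodl g n) = prodl (fun i => op (f i) (g i)) n.
Proof.
  induction n; simpl; intros H. apply op_1l.
  rewrite <- IHn by (intros; apply H; lia).
  rewrite <- !op_assoc. f_equal. rewrite !op_assoc. f_equal.
  rewrite prodl_comm; auto; intros i hi; apply H; lia.
Qed.

Definition proj {G : Grp} (P : G -> Prop) (Ps : nat -> G -> Prop) (s : nat) (x : G) : nat -> G :=
  epsilon (inhabits (fun _ : nat => @one G))
    (fun f => P x -> (forall i, i < s -> Ps i (f i)) /\ x = prodl f s).


Lemma proj_spec {G : Grp} (P : G -> Prop) Ps s x :
  dprod_fam P Ps s -> P x ->
  (forall i, i < s -> Ps i (proj P Ps s x i)) /\ x = prodl (proj P Ps s x) s.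
Proof.
  intros hd hx. unfold proj.
  apply (epsilon_spec (inhabits (fun _ : nat => @one G))
    (fun f => P x -> (forall i, i < s -> Ps i (f i)) /\ x = prodl f s)); auto.
  destruct hd as [_ [_ [_ [h _]]]]. destruct (proj1 (h x) hx) as [f hf]. exists f; auto.
Qed.

Lemma proj_in {G : Grp} (P : G -> Prop) Ps s x i :
  dprod_fam P Ps s -> P x -> i < s -> Ps i (proj P Ps s x i).
Proof. intros hd hx hi. apply (proj_spec P Ps s x hd hx); auto. Qed.

Lemma proj_eq {G : Grp} (P : G -> Prop) Ps s x :
  dprod_fam P Ps s -> P x -> x = prodl (proj P Ps s x) s.
Proof. intros hd hx. apply (proj_spec P Ps s x hd hx). Qed.

Lemma proj_uniq {G : Grp} (P : G -> Prop) Ps s x f :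
  dprod_fam P Ps s -> P x -> (forall i, i < s -> Ps i (f i)) -> x = prodl f s ->
  forall i, i < s -> proj P Ps s x i = f i.
Proof.
  intros hd hx hf E i hi. destruct (proj_spec P Ps s x hd hx) as [h1 h2].
  destruct hd as [_ [_ [_ [_ hu]]]]. apply hu; auto. congruence.
Qed.

Lemma dp_sub {G : Grp} (P : G -> Prop) Ps s i : dprod_fam P Ps s -> i < s -> is_subgroup (Ps i).
Proof. intros [_ [h _]] hi; auto. Qed.

Lemma dp_P {G : Grp} (P : G -> Prop) Ps s : dprod_fam P Ps s -> is_subgroup P.
Proof. intros [h _]; auto. Qed.

Lemma dp_comm {G : Grp} (P : G -> Prop) Ps s i j x y : dprod_fam P Ps s -> i < s -> j < s -> i <> j ->
  Ps i x -> Ps j y -> op x y = op y x.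
Proof. intros [_ [_ [h _]]]; eauto. Qed.

Lemma dp_prod {G : Grp} (P : G -> Prop) Ps s f : dprod_fam P Ps s ->
  (forall i, i < s -> Ps i (f i)) -> P (prodl f s).
Proof. intros [_ [_ [_ [h _]]]] hf. apply h. eauto. Qed.

Lemma dp_factor {G : Grp} (P : G -> Prop) Ps s a y : dprod_fam P Ps s -> a < s -> Ps a y ->
  P y /\ proj P Ps s y a = y /\ (forall i, i < s -> i <> a -> proj P Ps s y i = one).
Proof.
  intros hd ha hy.
  set (f := fun i => if Nat.eq_dec i a then y else one).
  assert (hf : forall i, i < s -> Ps i (f i)).
  { intros i hi. unfold f. destruct (Nat.eq_dec i a). subst; auto. apply sg_one. eapply dp_sub; eauto. }
  assert (E : y = prodl f s).
  { rewrite (prodl_delta f s a); auto. unfold f. destruct (Nat.eq_dec a a); congruence.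
    intros i hi ne. unfold f. destruct (Nat.eq_dec i a); congruence. }
  assert (hP : P y). { rewrite E. eapply dp_prod; eauto. }
  split; auto. split.
  - rewrite (proj_uniq P Ps s y f hd hP hf E a ha). unfold f. destruct (Nat.eq_dec a a); congruence.
  - intros i hi ne. rewrite (proj_uniq P Ps s y f hd hP hf E i hi). unfold f. destruct (Nat.eq_dec i a); congruence.
Qed.

Lemma proj_mul {G : Grp} (P : G -> Prop) Ps s x y i :
  dprod_fam P Ps s -> P x -> P y -> i < s ->
  proj P Ps s (op x y) i = op (proj P Ps s x i) (proj P Ps s y i).
Proof.
  intros hd hx hy hi.
  apply (proj_uniq P Ps s (op x y) (fun i => op (proj P Ps s x i) (proj P Ps s y i))); auto.
  - apply sg_op; auto. eapply dp_P; eauto.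
  - intros k hk. apply sg_op. eapply dp_sub; eauto. apply proj_in; auto. apply proj_in; auto.
  - rewrite <- prodl_mul. rewrite <- !proj_eq; auto.
    intros a b ha hb. apply (dp_comm P Ps s a b); auto; try lia; apply proj_in; auto; lia.
Qed.

Lemma proj_one {G : Grp} (P : G -> Prop) Ps s i :
  dprod_fam P Ps s -> i < s -> proj P Ps s one i = one.
Proof.
  intros hd hi. apply (proj_uniq P Ps s one (fun _ => one)); auto.
  apply sg_one; eapply dp_P; eauto. intros; apply sg_one; eapply dp_sub; eauto.
  rewrite prodl_one; auto.
Qed.

Lemma proj_inv {G : Grp} (P : G -> Prop) Ps s x i :
  dprod_fam P Ps s -> P x -> i < s -> proj P Ps s (inv x) i = inv (proj P Ps s x i).
Proof.
  intros hd hx hi. apply inv_uniq_l. rewrite <- proj_mul; auto. rewrite op_Vl. apply proj_one; auto.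
  apply sg_inv; auto; eapply dp_P; eauto.
Qed.

Lemma proj_commute {G : Grp} (P : G -> Prop) Ps s x y i :
  dprod_fam P Ps s -> P x -> P y -> i < s -> op x y = op y x ->
  op (proj P Ps s x i) (proj P Ps s y i) = op (proj P Ps s y i) (proj P Ps s x i).
Proof. intros hd hx hy hi E. rewrite <- !proj_mul, E; auto. Qed.

Lemma comm_components {G : Grp} (P : G -> Prop) Ps s x z :
  dprod_fam P Ps s -> P x -> (forall i, i < s -> op z (proj P Ps s x i) = op (proj P Ps s x i) z) ->
  op z x = op x z.
Proof. intros hd hx H. rewrite (proj_eq P Ps s x hd hx). apply prodl_comm; auto. Qed.

Lemma sig_eq {G : Grp} (A : G -> Prop) (x y : {z | A z}) : proj1_sig x = proj1_sig y -> x = y.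
Proof. destruct x, y; simpl; intros ->. f_equal. apply proof_irrelevance. Qed.

Definition subGrp {G : Grp} (A : G -> Prop) (hA : is_subgroup A) : Grp.
Proof.
  refine (@MkGrp {x | A x}
    (fun x y => exist _ (op (proj1_sig x) (proj1_sig y)) (sg_op A _ _ hA (proj2_sig x) (proj2_sig y)))
    (fun x => exist _ (inv (proj1_sig x)) (sg_inv A _ hA (proj2_sig x)))
    (exist _ one (sg_one A hA)) _ _ _).
  - intros; apply sig_eq; simpl; apply op_assoc.
  - intros; apply sig_eq; simpl; apply op_1l.
  - intros; apply sig_eq; simpl; apply op_Vl.
Defined.

Lemma fi_preimage {G : Grp} (P : G -> Prop) Ps s b (H : G -> Prop) :
  dprod_fam P Ps s -> b < s -> finite_index H (Ps b) ->
  finite_index (fun x => P x /\ H (proj P Ps s x b)) P.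
Proof.
  intros hd hb [hH [hsub [l hl]]]. pose proof (dp_P _ _ _ hd) as hPg. split; [|split].
  - split; [|split].
    + split. apply sg_one; auto. rewrite proj_one; auto. apply sg_one; auto.
    + intros x y [] []. split. apply sg_op; auto. rewrite proj_mul; auto. apply sg_op; auto.
    + intros x []. split. apply sg_inv; auto. rewrite proj_inv; auto. apply sg_inv; auto.
  - intros x []; auto.
  - exists l. intros k hk. destruct (hl (proj P Ps s k b)) as [c [hc [hc1 hc2]]].
    apply proj_in; auto.
    destruct (dp_factor P Ps s b c hd hb hc1) as [cP [cb _]].
    exists c. split; auto. split; auto. split. apply sg_op; auto. apply sg_inv; auto.
    rewrite proj_mul, proj_inv, cb; auto. apply sg_inv; auto.
Qed.

Lemma nontriv_infinite {G : Grp} (A : G -> Prop) (hA : is_subgroup A) :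
  torsion_free (@fullset G) -> ~ trivial A -> infinite (@fullset (subGrp A hA)).
Proof.
  intros htf hnt [l hl]. apply hnt. intros g hg. apply NNPP; intro ne.
  assert (Hin : forall n, In (pw g n) (map (@proj1_sig _ _) l)).
  { intro n. pose (e := exist A (pw g n) (sg_pw A g n hA hg) : subGrp A hA).
    change (pw g n) with (proj1_sig e). apply in_map. apply hl. exact I. }
  destruct (pigeon _ _ Hin) as [a [b [hab E]]].
  destruct (pw_le_diff g a b hab) as [m Em]. rewrite Em in E.
  apply ne. apply (htf g I m).
  apply (cancel_l (pw g a)). rewrite <- E, op_1r. reflexivity.
Qed.

Lemma dprod2_uniq {G : Grp} (X A B : G -> Prop) a b a' b' :
  dprod2 X A B -> A a -> B b -> A a' -> B b' -> op a b = op a' b' -> a = a' /\ b = b'.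
Proof.
  intros [hX [hA [hB [_ [_ [hc [hi _]]]]]]] ha hb ha' hb' E.
  assert (E2 : op (inv a') a = op b' (inv b)).
  { apply (cancel_l a'). apply (cancel_r b). rewrite !op_assoc, op_Vr, op_1l.
    rewrite <- op_assoc, op_Vl, op_1r. exact E. }
  assert (Z : op (inv a') a = one).
  { apply hi. apply sg_op; auto; apply sg_inv; auto. rewrite E2. apply sg_op; auto; apply sg_inv; auto. }
  assert (a = a'). { apply (cancel_l (inv a')). rewrite Z, op_Vl. reflexivity. }
  subst. split; auto. apply (cancel_l a'). exact E.
Qed.

Lemma dprod2_iso {G : Grp} (X Y A B : G -> Prop) (hA : is_subgroup A) (hB : is_subgroup B) :
  dprod2 X A B -> (forall x, Y x <-> X x) ->
  iso_sub Y (@fullset (prodGrp (subGrp A hA) (subGrp B hB))).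
Proof.
  intros hd hYX. pose proof hd as [hX [_ [_ [sA [sB [hc [hi hdec]]]]]]].
  set (T := prodGrp (subGrp A hA) (subGrp B hB)).
  set (f := fun x : G => epsilon (inhabits (@one T))
       (fun p : T => X x -> x = op (proj1_sig (fst p)) (proj1_sig (snd p)))).
  assert (fspec : forall x, X x -> x = op (proj1_sig (fst (f x))) (proj1_sig (snd (f x)))).
  { intros x hx. apply (epsilon_spec (inhabits (@one T))
       (fun p : T => X x -> x = op (proj1_sig (fst p)) (proj1_sig (snd p)))); auto.
    destruct (hdec x hx) as [a [b [ha [hb E]]]].
    exists (exist A a ha, exist B b hb). intros _. exact E. }
  assert (fu : forall x a b (ha : A a) (hb : B b), x = op a b -> f x = (exist A a ha, exist B b hb)).
  { intros x a b ha hb E. assert (hx : X x). { rewrite E; apply sg_op; auto. }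
    pose proof (fspec x hx) as E2. destruct (f x) as [[a' ha'] [b' hb']]. simpl in E2.
    destruct (dprod2_uniq X A B a b a' b' hd ha hb ha' hb') as [-> ->]. congruence.
    f_equal; apply sig_eq; reflexivity. }
  exists f. split; [|split].
  - intros x y hx hy. apply hYX in hx. apply hYX in hy.
    pose proof (fspec x hx) as Ex. pose proof (fspec y hy) as Ey.
    destruct (f x) as [[a1 ha1] [b1 hb1]] eqn:fx. destruct (f y) as [[a2 ha2] [b2 hb2]] eqn:fy.
    simpl in *. rewrite (fu (op x y) (op a1 a2) (op b1 b2) (sg_op _ _ _ hA ha1 ha2) (sg_op _ _ _ hB hb1 hb2)).
    reflexivity. rewrite Ex, Ey. rewrite !op_assoc. f_equal. rewrite <- !op_assoc. f_equal.
    symmetry; apply hc; auto.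
  - intros x y hx hy E. apply hYX in hx. apply hYX in hy. rewrite (fspec x hx), (fspec y hy), E. reflexivity.
  - intros [[a ha] [b hb]]. split; [|intros _; exact I]. intros _.
    exists (op a b). split. apply hYX. apply sg_op; auto. apply fu. reflexivity.
Qed.

Lemma full_fi {G : Grp} : finite_index (@fullset G) (@fullset G).
Proof. apply fi_refl, sg_full. Qed.

Lemma dprod2_commens {G : Grp} (X A B : G -> Prop) :
  torsion_free (@fullset G) -> dprod2 X A B -> ~ trivial A -> ~ trivial B -> commens_prod_inf X.
Proof.
  intros htf hd na nb. pose proof hd as [hX [hA [hB _]]].
  exists (subGrp A hA), (subGrp B hB). split. apply nontriv_infinite; auto. split. apply nontriv_infinite; auto.
  exists X, fullset. split. apply fi_refl; auto. split. apply full_fi.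
  apply (dprod2_iso X X A B hA hB hd). tauto.
Qed.

Lemma dprod2_virt {G : Grp} (X Y A B : G -> Prop) :
  torsion_free (@fullset G) -> dprod2 X A B -> ~ trivial A -> ~ trivial B ->
  is_subgroup Y -> (forall x, Y x <-> X x) -> virt_prod_inf Y.
Proof.
  intros htf hd na nb hY hYX. pose proof hd as [hX [hA [hB _]]].
  exists (subGrp A hA), (subGrp B hB). split. apply nontriv_infinite; auto. split. apply nontriv_infinite; auto.
  exists Y. split. apply fi_refl; auto.
  apply (dprod2_iso X Y A B hA hB hd hYX).
Qed.

Lemma cent_sg {G : Grp} (g : G) : is_subgroup (fun y => op g y = op y g).
Proof.
  split; [|split].
  - rewrite op_1l, op_1r; auto.
  - intros x y hx hy. rewrite op_assoc, hx, <- op_assoc, hy, op_assoc. reflexivity.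
  - intros x hx. transitivity (op (inv x) (op (op x g) (inv x))).
    + rewrite !op_assoc, op_Vl, op_1l; reflexivity.
    + rewrite <- hx, <- (op_assoc g x), op_Vr, op_1r. reflexivity.
Qed.

Lemma comm_commutator {G : Grp} (x y : G) : op x y = op y x -> commutator x y = one.
Proof.
  intro E. unfold commutator. rewrite E, <- op_assoc, (op_assoc (inv y) y), op_Vl, op_1l, op_Vl. reflexivity.
Qed.

Lemma pw1 {G : Grp} (x : G) : pw x 1 = x.
Proof. simpl. apply op_1l. Qed.

Lemma proj_prodl {G : Grp} (P : G -> Prop) Ps s (f : nat -> G) n i :
  dprod_fam P Ps s -> i < s -> (forall k, k < n -> P (f k)) ->
  proj P Ps s (prodl f n) i = prodl (fun k => proj P Ps s (f k) i) n.
Proof.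
  intros hd hi. induction n; simpl; intros H. apply proj_one; auto.
  rewrite proj_mul; auto. rewrite IHn; auto. apply prodl_in. eapply dp_P; eauto. auto.
Qed.

Lemma comm_proj {G : Grp} (P : G -> Prop) Ps s y x i :
  dprod_fam P Ps s -> P y -> P x -> op y x = op x y -> i < s ->
  op y (proj P Ps s x i) = op (proj P Ps s x i) y.
Proof.
  intros hd hy hx E hi. symmetry. apply (comm_components P Ps s y); auto.
  intros m hm. destruct (Nat.eq_dec m i) as [->|ne].
  - apply proj_commute; auto.
  - apply (dp_comm P Ps s i m); auto; apply proj_in; auto.
Qed.

Lemma Qn_sg {G : Grp} (P : G -> Prop) Ps s (G1 : G -> Prop) n :
  dprod_fam P Ps s -> is_subgroup G1 -> n <= s ->
  is_subgroup (fun x => P x /\ forall i, i < n -> G1 (proj P Ps s x i)).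
Proof.
  intros hd hG hn. pose proof (dp_P _ _ _ hd). split; [|split].
  - split. apply sg_one; auto. intros; rewrite proj_one by (auto; lia). apply sg_one; auto.
  - intros x y [] []. split. apply sg_op; auto. intros; rewrite proj_mul by (auto; lia). apply sg_op; auto.
  - intros x []. split. apply sg_inv; auto. intros; rewrite proj_inv by (auto; lia). apply sg_inv; auto.
Qed.

Lemma Qn_fi {G : Grp} (P : G -> Prop) Ps s (G1 : G -> Prop) n :
  dprod_fam P Ps s -> finite_index G1 (@fullset G) -> n <= s ->
  finite_index (fun x => P x /\ forall i, i < n -> G1 (proj P Ps s x i)) P.
Proof.
  intros hd hG1. pose proof (dp_P _ _ _ hd) as hPg. pose proof hG1 as [hG _].
  induction n; intros hn.
  - apply (fi_mono P); auto. apply fi_refl; auto. apply Qn_sg; auto; lia.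
    intros x hx; split; auto; intros; lia. intros x []; auto.
  - assert (F : finite_index (fun x => Ps n x /\ G1 x) (Ps n)).
    { apply (fi_restrict G1 fullset); auto. apply sg_full. eapply dp_sub; eauto; lia. intros x _; exact I. }
    pose proof (fi_preimage P Ps s n _ hd ltac:(lia) F) as F2.
    pose proof (fi_inter _ _ P (IHn ltac:(lia)) F2 hPg) as F3.
    apply (fi_mono _ _ _ F3). apply Qn_sg; auto.
    + intros x [[hx h1] [_ [_ h2]]]. split; auto. intros i hi. destruct (Nat.eq_dec i n). subst; auto. apply h1; lia.
    + intros x []; auto.
Qed.

Lemma rs_in_R {G : Grp} (R : G -> Prop) Rs t j y : dprod_fam R Rs t -> j < t -> Rs j y -> R y.
Proof. intros hd hj hy. apply (dp_factor R Rs t j y hd hj hy). Qed.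

Lemma core_K1 {G : Grp} (P : G -> Prop) Ps s R Rs t j Sg :
  torsion_free (@fullset G) -> dprod_fam P Ps s -> dprod_fam R Rs t -> sub R P -> finite_index R P ->
  (forall g, VZ P g -> g = one) -> j < t -> IMC (Rs j) Sg ->
  forall sg, Sg sg -> forall a b, a < s -> b < s -> a <> b ->
  proj P Ps s sg a = one \/ proj P Ps s sg b = one.
Proof.
  intros htf hPd hRd hRP hRfi hVZ hj [[hQ [hSQ hgen]] [hind hmax]] sg hsg a b ha hb hab.
  apply NNPP; intros Hn. apply not_or_and in Hn. destruct Hn as [na nb].
  pose proof (dp_P _ _ _ hPd) as hPg. pose proof (dp_P _ _ _ hRd) as hRg.
  assert (sgR : Rs j sg) by auto.
  assert (sgRR : R sg) by (eapply rs_in_R; eauto).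
  assert (sgP : P sg) by auto.
  set (u := proj P Ps s sg a).
  assert (uPa : Ps a u) by (apply proj_in; auto).
  assert (uP : P u) by (apply (dp_factor P Ps s a u); auto).
  destruct (fi_power R P u hRfi hPg uP) as [n hgR].
  set (g := pw u (S n)) in *.
  assert (gPa : Ps a g) by (apply sg_pw; auto; eapply dp_sub; eauto).
  assert (gP : P g) by auto.
  assert (gne : g <> one) by (intro E; apply na; apply (htf u I n); exact E).
  assert (cg : forall y, P y -> op y sg = op sg y -> op y g = op g y).
  { intros y hy E. unfold g. apply pw_comm. apply (comm_proj P Ps s y sg a); auto. }
  assert (central : forall z, P z -> (forall x, R x -> op z x = op x z) -> z = one).
  { intros z hz hc. apply hVZ. split; auto. exists R. split; auto. }
  assert (gRj : Rs j g).
  { assert (other : forall k, k < t -> k <> j -> proj R Rs t g k = one).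
    { intros k hk hkj. set (z := proj R Rs t g k).
      assert (zRk : Rs k z) by (apply proj_in; auto).
      assert (zR : R z) by (eapply rs_in_R; eauto).
      apply central; auto. intros x hx.
      apply (comm_components R Rs t x z); auto. intros m hm.
      destruct (Nat.eq_dec m k) as [->|nmk].
      - set (y := proj R Rs t x k).
        assert (yRk : Rs k y) by (apply proj_in; auto).
        assert (yR : R y) by (eapply rs_in_R; eauto).
        assert (Eys : op y sg = op sg y) by (apply (dp_comm R Rs t k j); auto).
        pose proof (cg y (hRP _ yR) Eys) as Eyg.
        pose proof (proj_commute R Rs t y g k hRd yR hgR hk Eyg) as E2.
        destruct (dp_factor R Rs t k y hRd hk yRk) as [_ [ey _]].
        rewrite ey in E2. symmetry. exact E2.
      - apply (dp_comm R Rs t k m); auto; apply proj_in; auto. }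
    rewrite (proj_eq R Rs t g hRd hgR). rewrite (prodl_delta _ t j); auto.
    apply proj_in; auto. }
  assert (csub : sub (centraliser (Rs j) sg) (centraliser (Rs j) g)).
  { intros y [hy E]. split; auto. apply cg; auto. apply hRP. eapply rs_in_R; eauto. }
  assert (csub2 : sub (centraliser (Rs j) g) (centraliser (Rs j) sg)).
  { apply NNPP. intro H. apply gne. apply (hmax sg g hsg gRj). split; auto. }
  set (v := proj P Ps s sg b).
  assert (vPb : Ps b v) by (apply proj_in; auto).
  assert (vP : P v) by (apply (dp_factor P Ps s b v); auto).
  assert (cv : forall y, R y -> Ps b y -> op v y = op y v).
  { intros y hyR hyb.
    assert (Eyg : op y g = op g y) by (apply (dp_comm P Ps s b a); auto).
    pose proof (proj_commute R Rs t y g j hRd hyR hgR hj Eyg) as E2.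
    destruct (dp_factor R Rs t j g hRd hj gRj) as [_ [eg _]]. rewrite eg in E2.
    assert (yj : Rs j (proj R Rs t y j)) by (apply proj_in; auto).
    destruct (csub2 (proj R Rs t y j) (conj yj E2)) as [_ E3].
    assert (Eys : op sg y = op y sg).
    { apply (comm_components R Rs t y sg); auto. intros m hm.
      destruct (Nat.eq_dec m j) as [->|nmj]. symmetry; exact E3.
      apply (dp_comm R Rs t j m); auto. apply proj_in; auto. }
    pose proof (comm_proj P Ps s y sg b hPd (hRP _ hyR) sgP (eq_sym Eys) hb) as E4.
    symmetry. exact E4. }
  apply nb. apply hVZ. split; auto.
  assert (F : finite_index (fun x => Ps b x /\ R x) (Ps b)).
  { apply (fi_restrict R P); auto. eapply dp_sub; eauto.
    intros x hx. apply (dp_factor P Ps s b x); auto. }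
  exists (fun x => P x /\ (fun x => Ps b x /\ R x) (proj P Ps s x b)). split.
  exact (fi_preimage P Ps s b _ hPd hb F).
  intros k [hk [hkb hkR]]. apply (comm_components P Ps s k v); auto.
  intros m hm. destruct (Nat.eq_dec m b) as [->|nmb]. apply cv; auto.
  apply (dp_comm P Ps s b m); auto. apply proj_in; auto.
Qed.

Lemma one_sg {G : Grp} : is_subgroup (fun y : G => y = one).
Proof.
  split; [|split]; auto. intros x y -> ->; apply op_1l. intros x ->; apply inv_one.
Qed.

Lemma align_j {G : Grp} (P : G -> Prop) Ps s R Rs t j :
  torsion_free (@fullset G) -> dprod_fam P Ps s -> dprod_fam R Rs t -> sub R P -> finite_index R P ->
  (forall g, VZ P g -> g = one) -> j < t ->
  (inf_cyclic (Rs j) \/ exists Sg, IMC (Rs j) Sg) ->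
  (forall y, Rs j y -> y = one) \/ exists i0, i0 < s /\ forall y, Rs j y -> Ps i0 y.
Proof.
  intros htf hPd hRd hRP hRfi hVZ hj hc.
  pose proof (dp_P _ _ _ hPd) as hPg. pose proof (dp_P _ _ _ hRd) as hRg.
  assert (central : forall z, P z -> (forall x, R x -> op z x = op x z) -> z = one).
  { intros z hz hcz. apply hVZ. split; auto. exists R. split; auto. }
  destruct hc as [[g [[hQ [hSQ hgen]] _]] | [Sg hIMC]].
  - left. assert (gR : Rs j g) by (apply hSQ; reflexivity).
    assert (g1 : g = one).
    { apply central. apply hRP. eapply rs_in_R; eauto.
      intros x hx. apply (comm_components R Rs t x g); auto. intros m hm.
      destruct (Nat.eq_dec m j) as [->|nmj].
      + apply (hgen _ (cent_sg g)). intros y ->. reflexivity. apply proj_in; auto.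
      + apply (dp_comm R Rs t j m); auto. apply proj_in; auto. }
    intros y hy. apply (hgen _ one_sg); auto. intros y' ->; exact g1.
  - pose proof (core_K1 P Ps s R Rs t j Sg htf hPd hRd hRP hRfi hVZ hj hIMC) as K1.
    destruct hIMC as [[hQ [hSQ hgen]] [hind hmax]].
    assert (SP : forall x, Sg x -> P x).
    { intros x hx. apply hRP. eapply rs_in_R; eauto. }
    assert (K2 : forall x i0, Sg x -> i0 < s -> proj P Ps s x i0 <> one -> Ps i0 x).
    { intros x i0 hx hi0 ne. rewrite (proj_eq P Ps s x hPd (SP x hx)).
      rewrite (prodl_delta _ s i0); auto. apply proj_in; auto.
      intros i hi nii0. destruct (K1 x hx i i0 hi hi0 nii0); auto; contradiction. }
    assert (K3 : forall x, Sg x -> x <> one -> exists i0, i0 < s /\ proj P Ps s x i0 <> one).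
    { intros x hx ne. apply NNPP; intro H. apply ne.
      rewrite (proj_eq P Ps s x hPd (SP x hx)). apply prodl_one. intros i hi.
      apply NNPP; intro H2. apply H; eauto. }
    destruct (classic (forall x, Sg x -> x = one)) as [Hall|Hex].
    + left. intros y hy. apply (hgen _ one_sg); auto.
    + right. apply not_all_ex_not in Hex. destruct Hex as [x0 Hx0].
      apply imply_to_and in Hx0. destruct Hx0 as [hx0 ne0].
      destruct (K3 x0 hx0 ne0) as [i0 [hi0 nei0]].
      exists i0. split; auto. apply hgen. eapply dp_sub; eauto.
      intros x hx. destruct (classic (x = one)) as [->|nex].
      * apply sg_one; eapply dp_sub; eauto.
      * destruct (classic (x = x0)) as [->|nexx0]. apply K2; auto.
        destruct (K3 x hx nex) as [i1 [hi1 nei1]].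
        destruct (Nat.eq_dec i1 i0) as [<-|ni]. apply K2; auto.
        exfalso. apply (hind x0 x hx0 hx (fun E => nexx0 (eq_sym E)) 1 1); auto.
        rewrite !pw1. apply comm_commutator.
        apply (dp_comm P Ps s i0 i1); auto; apply K2; auto.
Qed.

Lemma align {G : Grp} (P : G -> Prop) Ps s R Rs t :
  torsion_free (@fullset G) -> dprod_fam P Ps s -> dprod_fam R Rs t -> sub R P -> finite_index R P ->
  (forall g, VZ P g -> g = one) ->
  (forall j, j < t -> inf_cyclic (Rs j) \/ exists Sg, IMC (Rs j) Sg) ->
  forall x, R x -> forall i, i < s -> R (proj P Ps s x i).
Proof.
  intros htf hPd hRd hRP hRfi hVZ hc x hx i hi.
  pose proof (dp_P _ _ _ hPd) as hPg. pose proof (dp_P _ _ _ hRd) as hRg.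
  rewrite (proj_eq R Rs t x hRd hx). rewrite proj_prodl; auto.
  2: { intros k hk. apply hRP. eapply rs_in_R; eauto. apply proj_in; auto. }
  apply prodl_in; auto. intros k hk.
  set (y := proj R Rs t x k). assert (hy : Rs k y) by (apply proj_in; auto).
  destruct (align_j P Ps s R Rs t k htf hPd hRd hRP hRfi hVZ hk (hc k hk)) as [H1|[i0 [hi0 H2]]].
  - rewrite (H1 y hy), proj_one; auto. apply sg_one; auto.
  - destruct (dp_factor P Ps s i0 y hPd hi0 (H2 y hy)) as [_ [e1 e2]].
    destruct (Nat.eq_dec i i0) as [->|ne].
    + rewrite e1. eapply rs_in_R; eauto.
    + rewrite e2; auto. apply sg_one; auto.
Qed.

Theorem proposition5p2 (G : Grp) (G1 : G -> Prop)
  (hG1 : finite_index G1 (@fullset G))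
  (htf2 : torsion_free (@fullset G)) (htf1 : torsion_free G1)
  (hi1 : cond_i G1) (hi2 : cond_i (@fullset G))
  (hii : cond_ii G1)
  (hiii : cond_iii (@fullset G))
  (hiv : almost_stable_centralisers (@fullset G))
  (P : G -> Prop) (Ps : nat -> G -> Prop) (s : nat)
  (hP : maximal_product_sub (@fullset G) P)
  (hPs : dprod_fam P Ps s)
  (hVZ : forall g, VZ P g -> g = one)
  (hnv : forall i, i < s -> ~ virt_prod_inf (Ps i)) :
  exists (R : G -> Prop) (Rs : nat -> G -> Prop),
    maximal_product_sub G1 R /\ dprod_fam R Rs s /\
    forall i, i < s -> finite_index (Rs i) (Ps i).
Proof.
  pose proof (dp_P _ _ _ hPs) as hPg. pose proof hG1 as [hG1g _].
  set (pr := proj P Ps s).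
  assert (pow1 : forall i p, i < s -> Ps i p -> p <> one -> exists q, Ps i q /\ G1 q /\ q <> one).
  { intros i p hi hp ne. destruct (fi_power G1 fullset p hG1 sg_full I) as [n hn].
    exists (pw p (S n)). split. apply sg_pw; auto; eapply dp_sub; eauto. split; auto.
    intro E. apply ne. apply (htf2 p I n E). }
  pose proof hP as [_ [[A [B [nA [nB hAB]]]] hPmax]].
  pose proof hAB as [_ [hA [hB [sA [sB _]]]]].
  assert (exa : exists a, a < s /\ ~ trivial (Ps a)).
  { apply NNPP; intro H. apply nA. intros x hx.
    rewrite (proj_eq P Ps s x hPs (sA x hx)). apply prodl_one. intros i hi.
    apply NNPP; intro H2. apply H. exists i. split; auto. intro T. apply H2. apply T. apply proj_in; auto. }
  destruct exa as [a [ha nta]].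
  assert (exb : exists b, b < s /\ b <> a /\ ~ trivial (Ps b)).
  { apply NNPP; intro H. apply (hnv a ha).
    apply (dprod2_virt P (Ps a) A B htf2 hAB nA nB). eapply dp_sub; eauto.
    intro x. split.
    - intro hx. apply (dp_factor P Ps s a x hPs ha hx).
    - intro hx. rewrite (proj_eq P Ps s x hPs hx). rewrite (prodl_delta _ s a); auto. apply proj_in; auto.
      intros i hi nia. apply NNPP; intro H2. apply H. exists i. split; auto. split; auto.
      intro T. apply H2. apply T. apply proj_in; auto. }
  destruct exb as [b [hb [hba ntb]]].
  set (Q := fun x => P x /\ forall i, i < s -> G1 (pr x i)).
  assert (hQg : is_subgroup Q) by (apply Qn_sg; auto).
  assert (hQfi : finite_index Q P) by (apply Qn_fi; auto).
  assert (QG1 : sub Q G1).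
  { intros x [hx h]. rewrite (proj_eq P Ps s x hPs hx). apply prodl_in; auto. }
  assert (factQ : forall i x, i < s -> Ps i x -> G1 x -> Q x).
  { intros i x hi hx hg. destruct (dp_factor P Ps s i x hPs hi hx) as [xP [e1 e2]].
    split; auto. intros k hk. unfold pr. destruct (Nat.eq_dec k i) as [E|ne].
    - subst k. rewrite e1. exact hg.
    - rewrite (e2 k hk ne). apply sg_one; auto. }
  assert (dQ : dprod2 Q (fun x => Ps a x /\ G1 x) (fun x => Q x /\ pr x a = one)).
  { split. exact hQg. split. apply sg_inter; auto. eapply dp_sub; eauto. split.
    { split; [|split].
      - split. apply sg_one; auto. apply proj_one; auto.
      - intros x y [hx ex] [hy ey]. split. apply sg_op; auto. unfold pr. rewrite proj_mul; auto.
        unfold pr in ex, ey. rewrite ex, ey, op_1l; auto. apply hx. apply hy.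
      - intros x [hx ex]. split. apply sg_inv; auto. unfold pr. rewrite proj_inv; auto.
        unfold pr in ex. rewrite ex, inv_one; auto. apply hx. }
    split. intros x [h1 h2]. exact (factQ a x ha h1 h2).
    split. intros x [h1 h2]. auto.
    split. intros x y [hx _] [[hy _] ey]. apply (comm_components P Ps s y x); auto.
    intros m hm. destruct (Nat.eq_dec m a) as [->|nma]. unfold pr in ey; rewrite ey, op_1l, op_1r; auto.
    apply (dp_comm P Ps s a m); auto. apply proj_in; auto.
    split. intros x [hx _] [_ ex]. destruct (dp_factor P Ps s a x hPs ha hx) as [_ [e1 _]].
    unfold pr in ex. congruence.
    intros q hq. destruct hq as [hqP hqG].
    exists (pr q a), (op (inv (pr q a)) q).
    assert (hqa : Ps a (pr q a)) by (apply proj_in; auto).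
    destruct (dp_factor P Ps s a _ hPs ha hqa) as [qaP [e1 _]].
    assert (hqQ : Q q) by (split; auto).
    split. split; auto. split. split. apply sg_op; auto. apply sg_inv; auto. apply (factQ a _ ha hqa (hqG a ha)).
    unfold pr in e1 |- *. rewrite proj_mul, proj_inv; auto. rewrite e1. apply op_Vl. apply sg_inv; auto.
    rewrite op_assoc, op_Vr, op_1l; auto. }
  assert (cQ : commens_prod_inf Q).
  { apply (dprod2_commens Q _ _ htf2 dQ).
    - destruct (NNPP _ (fun H => nta (fun x hx => NNPP _ (fun ne => H (ex_intro _ x (conj hx ne))))))
        as [p [hp nep]].
      destruct (pow1 a p ha hp nep) as [q [hq1 [hq2 hq3]]].
      intro T. apply hq3. apply T. split; auto.
    - destruct (NNPP _ (fun H => ntb (fun x hx => NNPP _ (fun ne => H (ex_intro _ x (conj hx ne))))))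
        as [p [hp nep]].
      destruct (pow1 b p hb hp nep) as [q [hq1 [hq2 hq3]]].
      intro T. apply hq3. apply T. split. eapply factQ; eauto.
      destruct (dp_factor P Ps s b q hPs hb hq1) as [_ [_ e2]]. apply e2; auto. }
  destruct (hi1 Q hQg QG1 cQ) as [R [hR QR]].
  pose proof hR as [RG1 [[A' [B' [nA' [nB' hAB']]]] hRmax]].
  pose proof hAB' as [hRg _].
  assert (RP : sub R P).
  { destruct (hi2 R hRg (fun _ _ => I) (dprod2_commens R A' B' htf2 hAB' nA' nB')) as [P' [hP' RP']].
    assert (E : same_set P P').
    { apply hiii; auto.
      apply (fi_mono Q); auto. apply sg_inter; auto. destruct hP' as [_ [[? [? [_ [_ [? _]]]]] _]]; auto.
      intros x hx. split. apply hx. apply RP', QR, hx. intros x []; auto. }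
    intros x hx. apply E. apply RP'; auto. }
  assert (hRfi : finite_index R P) by (apply (fi_mono Q); auto).
  destruct (hii R hR) as [t [Rs' [hRd hc]]].
  pose proof (align P Ps s R Rs' t htf2 hPs hRd RP hRfi hVZ hc) as AL.
  exists R, (fun i x => R x /\ Ps i x). split; auto. split.
  - split; auto. split. intros i hi. apply sg_inter; auto. eapply dp_sub; eauto.
    split. intros i j hi hj nij x y [_ hx] [_ hy]. apply (dp_comm P Ps s i j); auto.
    split.
    + intro x. split.
      * intro hx. exists (pr x). split. intros i hi. split. apply AL; auto. apply proj_in; auto.
        apply proj_eq; auto.
      * intros [f [hf ->]]. apply prodl_in; auto. intros i hi; apply hf; auto.
    + intros f g hfg E i hi. destruct hPs as [_ [_ [_ [_ hu]]]]. apply hu; auto.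
      intros k hk. destruct (hfg k hk) as [[_ h1] [_ h2]]; auto.
  - intros i hi. apply (fi_mono (fun x => Ps i x /\ G1 x)).
    apply (fi_restrict G1 fullset); auto. apply sg_full. eapply dp_sub; eauto. intros x _; exact I.
    apply sg_inter; auto. eapply dp_sub; eauto.
    intros x [h1 h2]. split; auto. apply QR. eapply factQ; eauto.
    intros x []; auto.
Qed.
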